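(* Let $T$ be an $n$-dimensional simplex in $\mathbb{R}^n$, and let $Q$ be a polytope in $\mathbb{R}^n$ having at most $n$ vertices. Suppose that, for every unit vector $u$, there exists $v \in u^\perp$ such that $Q_u + v \subseteq T_u$. Then there exists $v_0 \in \mathbb{R}^n$ such that $Q + v_0 \subseteq T$.
   Context: For a unit vector $u$ and a set $S\subseteq\mathbb{R}^n$, $S_u$ denotes the orthogonal projection of $S$ onto the hyperplane $u^\perp$. *)

(* Defs.v *)
From mathcomp Require Import all_boot all_order all_algebra.
From mathcomp Require Import reals.
Set Implicit Arguments. Unset Strict Implicit. Unset Printing Implicit Defensive.
Import Order.TTheory GRing.Theory Num.Theory.
Local Open Scope ring_scope.

Definition dotv (R : realType) (n : nat) (x y : 'rV[R]_n) : R :=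
  \sum_(i < n) x 0 i * y 0 i.

Definition conv (R : realType) (n k : nat) (p : 'I_k -> 'rV[R]_n)
  (x : 'rV[R]_n) : Prop :=
  exists w : 'I_k -> R, (forall i, 0 <= w i) /\ \sum_(i < k) w i = 1 /\
    x = \sum_(i < k) w i *: p i.

Definition affinely_independent (R : realType) (n k : nat)
  (p : 'I_k -> 'rV[R]_n) : Prop :=
  forall c : 'I_k -> R, \sum_(i < k) c i = 0 ->
    \sum_(i < k) c i *: p i = 0 -> forall i, c i = 0.

Definition is_simplex (R : realType) (n : nat) (S : 'rV[R]_n -> Prop) : Prop :=
  exists p : 'I_n.+1 -> 'rV[R]_n, affinely_independent p /\
    forall x, S x <-> conv p x.

(* S is a polytope with at most n vertices: the convex hull of at most n
   points (the vertices of conv P form a subset of P, and a polytope is the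
   convex hull of its vertices) *)
Definition polytope_at_most (R : realType) (n m : nat) (S : 'rV[R]_n -> Prop)
  : Prop :=
  exists k (p : 'I_k -> 'rV[R]_n), (k <= m)%N /\ forall x, S x <-> conv p x.

(* orthogonal projection onto u^perp, for a unit vector u *)
Definition projv (R : realType) (n : nat) (u x : 'rV[R]_n) : 'rV[R]_n :=
  x - dotv x u *: u.

Definition proj_set (R : realType) (n : nat) (S : 'rV[R]_n -> Prop)
  (u : 'rV[R]_n) (y : 'rV[R]_n) : Prop :=
  exists x, S x /\ y = projv u x.

(* Main.v *)
Require Import Defs.
From mathcomp Require Import all_boot all_order all_algebra.
From mathcomp Require Import reals ring lra.
Import Order.TTheory GRing.Theory Num.Theory.
Local Open Scope ring_scope.

Section Aux.
Variable R : realType.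

Lemma comb_mx m n (w : 'I_m -> R) (p : 'I_m -> 'rV[R]_n) :
  \sum_(i < m) w i *: p i = (\row_i w i) *m (\matrix_(i < m) p i).
Proof.
rewrite mulmx_sum_row; apply: eq_bigr => i _; by rewrite rowK mxE.
Qed.

Lemma sum_mx m (w : 'I_m -> R) :
  (\sum_(i < m) w i)%:M = (\row_i w i) *m (const_mx 1 : 'cV[R]_m).
Proof.
apply/matrixP => a b; rewrite !ord1 !mxE /= mulr1n.
by apply: eq_bigr => i _; rewrite !mxE mulr1.
Qed.

Lemma aff_uniq n (p : 'I_n.+1 -> 'rV[R]_n) (w1 w2 : 'I_n.+1 -> R) :
  affinely_independent p -> \sum_i w1 i = \sum_i w2 i ->
  \sum_i w1 i *: p i = \sum_i w2 i *: p i -> forall i, w1 i = w2 i.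
Proof.
move=> aff e1 e2 i; apply/eqP; rewrite -subr_eq0; apply/eqP.
apply: (aff (fun i => w1 i - w2 i)).
  by rewrite sumrB e1 subrr.
under eq_bigr do rewrite scalerBl.
by rewrite sumrB e2 subrr.
Qed.

Lemma bary_ex n (p : 'I_n.+1 -> 'rV[R]_n) x :
  affinely_independent p ->
  exists w : 'I_n.+1 -> R, \sum_i w i = 1 /\ \sum_i w i *: p i = x.
Proof.
move=> aff.
pose P := \matrix_(i < n.+1) p i.
pose M : 'M[R]_(n.+1, 1 + n) := row_mx (const_mx 1) P.
have uM : M \in unitmx.
  rewrite -row_free_unit; apply: inj_row_free => v.
  rewrite /M => hv.
  have : row_mx (v *m const_mx 1) (v *m P) = 0 :> 'M[R]_(1, 1 + n) by rewrite -mul_mx_row; exact: hv.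
  move/eqP; rewrite -row_mx0 => /eqP /eq_row_mx [h1 h2].
  have e := aff (fun i => v 0 i).
  have v0 : forall i, v 0 i = 0.
    apply: e.
      have := sum_mx _ (fun i => v 0 i).
      have -> : \row_i v 0 i = v by apply/rowP => i; rewrite mxE.
      rewrite h1 => /matrixP /(_ 0 0); rewrite !mxE /= mulr1n => ->.
      done.
    rewrite comb_mx.
    have -> : \row_i v 0 i = v by apply/rowP => i; rewrite mxE.
    done.
  by apply/rowP => i; rewrite v0 mxE; case: split => j; rewrite mxE.
pose l := row_mx (1 : 'M[R]_1) x *m invmx M.
have hl : l *m M = row_mx 1 x by rewrite mulmxKV.
have : row_mx (l *m const_mx 1) (l *m P) = row_mx 1 x :> 'M[R]_(1, 1 + n) by rewrite -mul_mx_row; exact: hl.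
move=> /eq_row_mx [h1 h2].
exists (fun i => l 0 i); split.
  have := sum_mx _ (fun i => l 0 i).
  have -> : \row_i l 0 i = l by apply/rowP => i; rewrite mxE.
  by rewrite h1 => /matrixP /(_ 0 0); rewrite !mxE /= mulr1n.
rewrite comb_mx.
have -> : \row_i l 0 i = l by apply/rowP => i; rewrite mxE.
done.
Qed.

Lemma sum_delta (V : lmodType R) m (j : 'I_m) (f : 'I_m -> V) :
  \sum_(l < m) ((l == j)%:R : R) *: f l = f j.
Proof.
rewrite (bigD1 j) //= eqxx scale1r big1 ?addr0 // => l /negbTE ->.
by rewrite scale0r.
Qed.

Lemma sum_delta1 m (j : 'I_m) : \sum_(l < m) ((l == j)%:R : R) = 1.
Proof.
rewrite (bigD1 j) //= eqxx big1 ?addr0 // => l /negbTE -> //.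
Qed.

Lemma min_ex k (F : 'I_k.+1 -> R) : exists i, forall i', F i <= F i'.
Proof.
exists [arg min_(i < ord0) F i]%O.
by case: arg_minP => // i _ h i'; apply: h.
Qed.

Lemma dotvZ n (c : R) (d : 'rV[R]_n) : dotv (c *: d) (c *: d) = c ^+ 2 * dotv d d.
Proof.
rewrite /dotv mulr_sumr; apply: eq_bigr => i _; rewrite !mxE; ring.
Qed.

End Aux.

Theorem lemma2p4 (R : realType) (n : nat) (T Q : 'rV[R]_n -> Prop) :
  is_simplex T -> polytope_at_most n Q ->
  (forall u : 'rV[R]_n, dotv u u = 1 ->
     exists v : 'rV[R]_n, dotv v u = 0 /\
       (forall y, proj_set Q u y -> proj_set T u (y + v))) ->
  exists v0 : 'rV[R]_n, forall x, Q x -> T (x + v0).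
Proof.
move=> [p [aff hT]] [k [q [hk hQ]]] H.
case: k q hk hQ => [|k] q hk hQ.
  exists 0 => x /hQ [w [_ [hw _]]]; move: hw; rewrite big_ord0 => /eqP.
  by rewrite eq_sym oner_eq0.
have := fun i : 'I_k.+1 => @bary_ex R n p (q i) aff.
case/fin_all_exists => L hL.
have := fun l : 'I_n.+1 => @min_ex R k (fun i => L i l).
case/fin_all_exists => ii hii.
have : ~~ injectiveb ii.
  apply/negP => /injectiveP /leq_card; rewrite !card_ord => hle.
  by have := leq_trans hle hk; rewrite ltnn.
case/injectivePn => j [j' njj' eij].
pose d := p j - p j'.
pose dd := dotv d d.
have dd_gt0 : 0 < dd.
  rewrite lt0r; apply/andP; split; last first.
    by apply: sumr_ge0 => i _; rewrite -expr2 sqr_ge0.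
  apply/negP => /eqP dd0.
  have d0 : d = 0.
    apply/rowP => i; suff -> : d 0 i = 0 by rewrite mxE.
    have := (psumr_eq0P (fun i _ => sqr_ge0 (d 0 i))).
    move: dd0; rewrite /dd /dotv.
    under eq_bigr do rewrite -expr2.
    move=> dd0 /(_ _ dd0 i isT) /eqP. by rewrite sqrf_eq0 => /eqP.
  have := @aff_uniq R n p (fun l => (l == j)%:R) (fun l => (l == j')%:R) aff.
  rewrite !sum_delta1 !sum_delta => /(_ erefl).
  move/eqP: d0; rewrite subr_eq0 => /eqP -> /(_ erefl j).
  rewrite eqxx (negbTE njj') => /eqP; by rewrite oner_eq0.
pose c := (Num.sqrt dd)^-1.
pose u := c *: d.
have hu : dotv u u = 1.
  rewrite dotvZ /c exprVn sqr_sqrtr ?ltW // mulVf //.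
  by rewrite gt_eqF.
have [v [_ hv]] := H u hu.
have [w0 [hw0s hw0p]] := @bary_ex R n p (v + p ord0) aff.
have [ell [hls hlp]] : exists ell : 'I_n.+1 -> R,
    \sum_l ell l = 0 /\ \sum_l ell l *: p l = v.
  exists (fun l => w0 l - (l == ord0)%:R); split.
    by rewrite sumrB hw0s sum_delta1 subrr.
  under eq_bigr do rewrite scalerBl.
  by rewrite sumrB hw0p sum_delta addrK.
have key : forall i, (forall l, l != j -> l != j' -> 0 <= L i l + ell l) /\
    0 <= L i j + L i j' + ell j + ell j'.
  move=> i.
  have : proj_set T u (Defs.projv u (q i) + v).
    apply: hv; exists (q i); split => //; apply/hQ.
    exists (fun l => (l == i)%:R); split; first by move=> l; rewrite ler0n.
    by rewrite sum_delta1 sum_delta.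
  case=> x [/hT [W [W0 [Ws Wp]]] hx].
  pose s := dotv x u - dotv (q i) u.
  have ex : x = q i + v + (s * c) *: d.
    have -> : x = Defs.projv u x + dotv x u *: u by rewrite /Defs.projv subrK.
    rewrite -hx /Defs.projv /s /u !scalerA -!scalerA scalerBl.
    by rewrite addrA addrAC (addrAC (q i)).
  pose C l := L i l + ell l + s * c * ((l == j)%:R - (l == j')%:R).
  have eqW := @aff_uniq R n p (W) (C) aff.
  have hL1 := hL i.
  case: hL1 => hLs hLp.
  have {}eqW : forall l, W l = C l.
    apply: eqW.
      rewrite Ws /C big_split /= big_split /= hLs hls -mulr_sumr sumrB !sum_delta1.
      by rewrite subrr mulr0 addr0 addr0.
    rewrite -Wp /C.
    under eq_bigr do rewrite !scalerDl.
    rewrite !big_split /= hLp hlp.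
    under eq_bigr do rewrite -scalerA scalerBl.
    by rewrite -scaler_sumr sumrB !sum_delta ex.
  split.
    move=> l hl hl'; have := W0 l; rewrite eqW /C (negbTE hl) (negbTE hl').
    by rewrite subrr mulr0 addr0.
  have := W0 j; have := W0 j'; rewrite !eqW /C !eqxx (negbTE njj') eq_sym (negbTE njj').
  move=> h1 h2; lra.
pose m l := L (ii l) l.
have hm : 0 <= \sum_l (m l + ell l).
  rewrite (bigD1 j) //= (bigD1 j') /=; last by rewrite eq_sym.
  rewrite addrA; apply: addr_ge0.
    have [_ h] := key (ii j); rewrite /m -eij; lra.
  apply: sumr_ge0 => l /andP [hl' hl].
  by have [h _] := key (ii l); apply: h.
have hS : 0 <= \sum_l m l by move: hm; rewrite big_split /= hls addr0.
pose S := \sum_l m l.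
pose t l := - m l + S / n.+1%:R.
have hts : \sum_l t l = 0.
  rewrite big_split /= sumrN sumr_const card_ord -/S -[_ *+ n.+1]mulr_natr mulfVK ?addNr //.
  by rewrite pnatr_eq0.
have ht : forall i l, 0 <= L i l + t l.
  move=> i l; have := hii l i; rewrite /t /m => h.
  have : 0 <= S / n.+1%:R by apply: divr_ge0 => //; rewrite ler0n.
  move: (S / n.+1%:R) => z hz; lra.
exists (\sum_l t l *: p l) => x /hQ [mu [mu0 [mus ->]]].
apply/hT.
exists (fun l => \sum_i mu i * (L i l + t l)); split.
  by move=> l; apply: sumr_ge0 => i _; apply: mulr_ge0.
split.
  rewrite exchange_big /=.
  under eq_bigr do rewrite -mulr_sumr big_split /= hts addr0 (proj1 (hL _)) mulr1.
  done.
rewrite [RHS](eq_bigr (fun l => \sum_i (mu i * (L i l + t l)) *: p l)); last first.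
  by move=> l _; rewrite -scaler_suml.
rewrite [RHS]exchange_big /=.
rewrite [RHS](eq_bigr (fun i => mu i *: (q i + \sum_l t l *: p l))); last first.
  move=> i _; rewrite -(proj2 (hL i)) scalerDr !scaler_sumr -big_split /=.
  by apply: eq_bigr => l _; rewrite mulrDr scalerDl !scalerA.
by rewrite [RHS](eq_bigr _ (fun i _ => scalerDr _ _ _)) big_split /= -scaler_suml mus scale1r.
Qed.
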